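(* Given any member of an IQP$^*$ circuit family, there is an efficient (polynomial-size) implementation of it in MBQC in which all single-qubit measurements are in fixed bases and are non-adaptive. That is, the measurements can be performed simultaneously, and linear classical post-processing of the outcomes yields exactly the output distribution of the IQP$^*$ circuit.
   Context: IQP$^*$ circuit family. The family is indexed by the input length $n$. For input $x\in\{0,1\}^n$, the circuit proceeds as follows. - It acts on $q=\mathrm{poly}(n)$ qubits prepared in $|x\rangle|0\rangle^{\otimes(q-n)}$. - It applies a unitary $U_n$, which depends only on $n$. $U_n$ is a product of $\mathrm{poly}(n)$ gates $D(\theta_z,z)=e^{i\theta_z X[z]}$. - In each gate, $z\in\{0,1\}^q$, $X[z]=\bigotimes_j X^{z_j}$ with $X$ the Pauli-$X$ operator, and $\theta_z\in(0,2\pi]$ has a $\mathrm{poly}(n)$-size description. - It measures every qubit in the computational basis. MBQC. A multi-qubit resource state (e.g. a cluster/graph state, made by preparing qubits in $|+\rangle$ and applying controlled-$Z$ gates) is prepared. Single-qubit projective measurements are then performed on it, and the outcomes are processed by linear classical side-processing (XOR and NOT gates). Non-adaptive means no measurement basis depends on the outcomes of other measurements. *)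

(* Defs.v *)
From HB Require Import structures.
From mathcomp Require Import all_boot all_order all_algebra.
From mathcomp Require Import complex.
From mathcomp Require Import reals trigo.

Set Implicit Arguments.
Unset Strict Implicit.
Unset Printing Implicit Defensive.

Import Order.TTheory GRing.Theory Num.Theory.
Local Open Scope ring_scope.
Local Open Scope complex_scope.

(* Computational basis of q qubits: bit strings w : 'I_q -> bool.       *)
Definition bits (q : nat) := {ffun 'I_q -> bool}.
Definition state (R : realType) (q : nat) := bits q -> R[i].

Definition normsq (R : realType) (z : R[i]) : R :=
  let: Complex a b := z in a ^+ 2 + b ^+ 2.

Definition cconj (R : realType) (z : R[i]) : R[i] := let: Complex a b := z in Complex a (- b).

Definition ket (R : realType) (q : nat) (w : bits q) : state R q :=
  fun v => if v == w then 1 else 0.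

Definition bxor (q : nat) (u v : bits q) : bits q := [ffun j => u j (+) v j].

(* X[z] = tensor_j X^{z_j}: acts on basis states by |w> |-> |w xor z>. *)
Definition Xz (R : realType) (q : nat) (z : bits q) (psi : state R q) : state R q :=
  fun w => psi (bxor w z).

(* D(theta, z) = exp(i theta X[z]) = cos(theta) I + i sin(theta) X[z]
   (as X[z]^2 = I). *)
Definition Dgate (R : realType) (q : nat) (theta : R) (z : bits q)
    (psi : state R q) : state R q :=
  fun w => (cos theta)%:C * psi w + 'i * (sin theta)%:C * Xz z psi w.

(* a gate D(theta_z, z) is recorded as the pair (theta_z, z) *)
Definition gate (R : realType) (q : nat) := (R * bits q)%type.

Definition gate_ok (R : realType) (q : nat) (g : gate R q) : Prop :=
  0 < g.1 /\ g.1 <= 2 * pi.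

(* U = product of the gates; the gates of the list are applied in order,
   the head first. *)
Definition apply_circuit (R : realType) (q : nat) (gs : seq (gate R q))
    (psi : state R q) : state R q :=
  foldl (fun phi g => Dgate g.1 g.2 phi) psi gs.

(* input |x>|0>^{q-n}: qubit j carries x_j for j < n and 0 otherwise *)
Definition input_bit (n : nat) (x : bits n) (k : nat) : bool :=
  if (insub k : option 'I_n) is Some i then x i else false.

Definition iqp_input (n q : nat) (x : bits n) : bits q :=
  [ffun j : 'I_q => input_bit x (val j)].

Definition iqp_prob (R : realType) (n q : nat) (gs : seq (gate R q))
    (x : bits n) (y : bits q) : R :=
  normsq (apply_circuit gs (@ket R q (@iqp_input n q x)) y).

Definition plus_state (R : realType) (N : nat) : state R N :=
  fun _ => ((Num.sqrt (2 : R))^-1 ^+ N)%:C.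

Definition CZ (R : realType) (N : nat) (i j : 'I_N) (psi : state R N) : state R N :=
  fun w => (if w i && w j then -1 else 1) * psi w.

(* the (undirected) edges {i,j}, i < j, of a graph given by a relation E
   (the relation is read symmetrically: {i,j} is an edge iff E i j || E j i) *)
Definition edges (N : nat) (E : rel 'I_N) : seq ('I_N * 'I_N) :=
  [seq e : 'I_N * 'I_N <- enum {: 'I_N * 'I_N}
     | (e.1 < e.2)%N && (E e.1 e.2 || E e.2 e.1)].

Definition graph_state (R : realType) (N : nat) (E : rel 'I_N) : state R N :=
  foldr (fun e psi => CZ e.1 e.2 psi) (@plus_state R N) (edges E).

(* a single-qubit orthonormal measurement basis {|b 0>, |b 1>}:
   b s k = <k | b s> is the k-th amplitude of the basis vector for outcome s *)
Definition qubit_basis (R : realType) := bool -> bool -> R[i].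

Definition qubit_onb (R : realType) (b : qubit_basis R) : Prop :=
  forall s t : bool,
    cconj (b s false) * b t false + cconj (b s true) * b t true
    = (if s == t then 1 else 0).

Definition mbqc_prob (R : realType) (N : nat) (E : rel 'I_N)
    (B : 'I_N -> qubit_basis R) (s : bits N) : R :=
  normsq (\sum_(w : bits N)
            (\prod_(j < N) cconj (B j (s j) (w j))) * @graph_state R N E w).

Definition lin_post (q N : nat) (A : 'I_q -> 'I_N -> bool) (c : bits q)
    (s : bits N) : bits q :=
  [ffun i => c i (+) \big[addb/false]_(j < N) (A i j && s j)].

Definition mbqc_out_prob (R : realType) (N q : nat) (E : rel 'I_N)
    (B : 'I_N -> qubit_basis R) (A : 'I_q -> 'I_N -> bool) (c : bits q)
    (y : bits q) : R :=
  \sum_(s : bits N | lin_post A c s == y) mbqc_prob E B s.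

Definition poly_bounded (f : nat -> nat) : Prop :=
  exists C k : nat, forall n, (f n <= C * n.+1 ^ k)%N.

(* Main.v *)
Require Import Defs.
From HB Require Import structures.
From mathcomp Require Import all_boot all_order all_algebra.
From mathcomp Require Import complex.
From mathcomp Require Import reals trigo.
From mathcomp Require Import ring lra zify.
Set Implicit Arguments. Unset Strict Implicit. Unset Printing Implicit Defensive.
Import Order.TTheory GRing.Theory Num.Theory.
Local Open Scope ring_scope.
Local Open Scope complex_scope.

Section S.
Variable R : realType.
Local Notation C := (R[i]).

Definition chi q (v a : bits q) : C := \prod_(i < q) (if v i && a i then -1 else 1).

Lemma chi_xor q (v u a : bits q) : chi (bxor v u) a = chi v a * chi u a.
Proof.
rewrite /chi -big_split /=; apply: eq_bigr => i _; rewrite ffunE.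
by case: (v i); case: (u i); case: (a i); rewrite /= ?mulr1 ?mul1r ?mulrNN ?mulr1.
Qed.

Lemma chi_sq q (v a : bits q) : chi v a * chi v a = 1.
Proof.
rewrite /chi -big_split /= big1 // => i _.
by case: (v i && a i); rewrite ?mulrNN mulr1.
Qed.

Lemma sum_chi q (v : bits q) :
  \sum_(a : bits q) chi v a = if v == [ffun=> false] then (2 ^ q)%:R else 0.
Proof.
rewrite /chi -(bigA_distr_bigA (fun i b => if v i && b then -1 else 1 : C)) /=.
under eq_bigr => i _ do rewrite big_bool /=.
case: eqP => [->|/eqP].
  under eq_bigr => i _ do rewrite ffunE /=.
  by rewrite prodr_const card_ord natrX.
move=> /negP Hv; have [i Hi]: exists i, v i.
  apply/existsP; apply/negP=> /existsP H; apply: Hv; apply/eqP/ffunP => j.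
  rewrite ffunE; case E: (v j) => //; case: H; by exists j.
by rewrite (bigD1 i) //= Hi /= addNr mul0r.
Qed.

Definition phi q (g : gate R q) (a : bits q) : C :=
  (cos g.1)%:C + 'i * (sin g.1)%:C * chi g.2 a.

Lemma circ_fourier q (gs : seq (gate R q)) (psi : state R q) (F : bits q -> C) :
  (forall y, psi y = \sum_a chi y a * F a) ->
  forall y, apply_circuit gs psi y = \sum_a chi y a * (F a * \prod_(g <- gs) phi g a).
Proof.
elim: gs psi F => [|g gs IH] psi F Hpsi y.
  by rewrite /apply_circuit /= Hpsi; apply: eq_bigr => a _; rewrite big_nil mulr1.
change (apply_circuit gs (Dgate g.1 g.2 psi) y = \sum_a chi y a * (F a * \prod_(g0 <- g :: gs) phi g0 a)).
have -> := (IH (Dgate g.1 g.2 psi) (fun a => F a * phi g a)) _ y.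
  by apply: eq_bigr => a _; rewrite big_cons !mulrA.
move=> w; rewrite /Dgate /Xz !Hpsi !mulr_sumr -big_split /=.
apply: eq_bigr => a _; rewrite chi_xor /phi; ring.
Qed.

Definition rho : R := (Num.sqrt (2 : R))^-1.

Lemma rho2 : rho ^+ 2 * 2 = 1.
Proof.
rewrite /rho exprVn sqr_sqrtr ?ler0n // mulVf // pnatr_eq0 //.
Qed.

Lemma ket_fourier q (u y : bits q) :
  @ket R q u y = \sum_a chi y a * ((rho ^+ (2 * q))%:C * chi u a).
Proof.
under eq_bigr => a _ do rewrite mulrCA -chi_xor.
rewrite -mulr_sumr sum_chi /ket.
have -> : (bxor y u == [ffun=> false]) = (y == u).
  apply/eqP/eqP => [H|->]; apply/ffunP => j.
    by have := congr1 (fun f : bits q => f j) H; rewrite !ffunE; case: (y j); case: (u j).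
  by rewrite !ffunE addbb.
case: eqP => _; last by rewrite mulr0.
rewrite exprM natrX -rmorphXn /= -exprM (mulnC 2) exprM.
rewrite -exprM mulnC exprM natrX.
have -> : (2%:R ^+ q : C) = ((2 : R) ^+ q)%:C by rewrite rmorphXn /= rmorph_nat.
by rewrite -rmorphM /= -exprMn rho2 expr1n.
Qed.

Lemma split_l q m (i : 'I_q) : split (lshift m i) = inl i.
Proof. exact: (unsplitK (inl _)). Qed.
Lemma split_r q m (g : 'I_m) : split (rshift q g) = inr g.
Proof. exact: (unsplitK (inr _)). Qed.

Definition join q m (a : bits q) (b : bits m) : bits (q + m) :=
  [ffun j => match split j with inl i => a i | inr g => b g end].
Definition unjoin q m (w : bits (q + m)) : bits q * bits m :=
  ([ffun i => w (lshift m i)], [ffun g => w (rshift q g)]).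

Lemma join_l q m a b (i : 'I_q) : @join q m a b (lshift m i) = a i.
Proof. by rewrite ffunE split_l. Qed.
Lemma join_r q m a b (g : 'I_m) : @join q m a b (rshift q g) = b g.
Proof. by rewrite ffunE split_r. Qed.

Lemma sum_join (V : nmodType) q m (F : bits (q + m) -> V) :
  \sum_w F w = \sum_a \sum_b F (@join q m a b).
Proof.
rewrite pair_bigA /= (reindex (fun p : bits q * bits m => join p.1 p.2)) //.
exists (@unjoin q m) => [[a b] _|w _].
  by rewrite /unjoin; congr pair; apply/ffunP => j; rewrite ffunE /= ?join_l ?join_r.
apply/ffunP => j; rewrite ffunE /=; have := splitK j.
by case: (split j) => k /= <-; rewrite ffunE.
Qed.

Lemma prod_split (V : comNzRingType) q m (F : 'I_(q + m) -> V) :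
  \prod_j F j = (\prod_(i < q) F (lshift m i)) * \prod_(g < m) F (rshift q g).
Proof. exact: big_split_ord. Qed.

Lemma graph_stateE N (E : rel 'I_N) (w : bits N) :
  graph_state R E w = (rho ^+ N)%:C *
    \prod_(e : 'I_N * 'I_N)
      (if ((e.1 < e.2)%N && (E e.1 e.2 || E e.2 e.1)) && (w e.1 && w e.2) then -1 else 1).
Proof.
rewrite /graph_state.
have -> : forall l, foldr (fun e psi => CZ e.1 e.2 psi) (@plus_state R N) l w
   = (\prod_(e <- l) (if w e.1 && w e.2 then -1 else 1)) * (rho ^+ N)%:C.
  elim => [|e l IH]; first by rewrite big_nil mul1r /plus_state.
  by rewrite /= /CZ IH big_cons mulrA.
rewrite mulrC /edges big_filter big_mkcond big_enum /=; congr (_ * _).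
by apply: eq_bigr => e _; case: ifP.
Qed.

Definition Eg q m (z : 'I_m -> bits q) : rel 'I_(q + m) := fun j1 j2 =>
  match split j1, split j2 with inl i, inr g => z g i | _, _ => false end.

Lemma edges_join q m (z : 'I_m -> bits q) a b :
  \prod_(e : 'I_(q + m) * 'I_(q + m))
      (if ((e.1 < e.2)%N && (Eg z e.1 e.2 || Eg z e.2 e.1)) &&
          (join a b e.1 && join a b e.2) then -1 else (1 : C))
  = \prod_(i < q) \prod_(g < m) (if z g i && a i && b g then -1 else 1).
Proof.
rewrite -(pair_bigA _ (fun j1 j2 : 'I_(q + m) =>
   (if ((nat_of_ord j1 < nat_of_ord j2)%N && (Eg z j1 j2 || Eg z j2 j1)) &&
          (join a b j1 && join a b j2) then -1 else (1 : C)))) /=.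
rewrite big_split_ord /=.
rewrite [X in _ * X]big1 ?mulr1; last first.
  move=> g _; rewrite big_split_ord /= !big1 ?mulr1 // => k _;
    rewrite /Eg ?split_l ?split_r /= ?andbF //.
  have -> : (q + g < k)%N = false.
    by apply/negbTE; rewrite -leqNgt (leq_trans (ltnW (ltn_ord k))) ?leq_addr.
  by [].
apply: eq_bigr => i _; rewrite big_split_ord /= big1 ?mul1r; last first.
  by move=> k _; rewrite /Eg !split_l /= andbF.
apply: eq_bigr => g _; rewrite /Eg split_l split_r join_l join_r /= orbF.
have -> : (i < q + g)%N by rewrite (leq_trans (ltn_ord i)) ?leq_addr.
by rewrite /= andbA.
Qed.

Definition ub q m (b : bits m) (z : 'I_m -> bits q) : bits q :=
  [ffun i => \big[addb/false]_(g < m) (b g && z g i)].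

Lemma chi_ub q m (b : bits m) (z : 'I_m -> bits q) a :
  chi (ub b z) a = \prod_(g < m) (if b g then chi (z g) a else 1).
Proof.
rewrite /ub; elim: (index_enum _) => [|g r IH].
  rewrite big_nil /chi big1 // => i _; by rewrite ffunE big_nil.
rewrite big_cons -IH.
have -> : [ffun i => \big[addb/false]_(j <- g :: r) (b j && z j i)]
   = bxor [ffun i => b g && z g i] [ffun i => \big[addb/false]_(j <- r) (b j && z j i)].
  by apply/ffunP => i; rewrite /bxor !ffunE big_cons.
rewrite chi_xor; congr (_ * _); case: (b g).
  by congr chi; apply/ffunP => i; rewrite ffunE.
by rewrite /chi big1 // => i _; rewrite ffunE.
Qed.

Lemma cconjE (z : C) : cconj z = z^*.
Proof. by case: z. Qed.

Definition Bx : qubit_basis R := fun t b => (if t && b then -1 else 1) * rho%:C.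
Definition Bg (th : R) : qubit_basis R :=
  fun s b => if s == b then (cos th)%:C else - 'i * (sin th)%:C.

Lemma rhoC : rho%:C * rho%:C + rho%:C * rho%:C = 1 :> C.
Proof.
rewrite -rmorphM -rmorphD /= -expr2 -mulr2n -mulr_natr rho2 //.
Qed.

Lemma Bx_onb : qubit_onb Bx.
Proof.
move=> s t; case: s; case: t; rewrite /Bx /=; apply/eqP; rewrite eq_complex /=; simpc.
all: rewrite ?andbT //; apply/eqP; rewrite -rho2; ring.
Qed.

Lemma Bg_onb th : qubit_onb (Bg th).
Proof.
move=> s t; rewrite /Bg !cconjE.
have h := cos2Dsin2 th.
case: s; case: t => /=; apply/eqP; rewrite eq_complex /=; simpc.
all: rewrite ?andbT ?andTb; apply/eqP.
- by rewrite -h; ring.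
- ring.
- ring.
- by rewrite -h; ring.
Qed.

Lemma cconj_real (r : R) : cconj r%:C = r%:C.
Proof. by apply/eqP; rewrite eq_complex /= oppr0 !eqxx. Qed.

Lemma cconj_mi (r : R) : cconj (- 'i * r%:C) = 'i * r%:C.
Proof. by apply/eqP; rewrite eq_complex /=; simpc. Qed.

Lemma gate_factor th (bb : bool) (x : C) : x * x = 1 ->
  cconj (Bg th bb false) * 1 + cconj (Bg th bb true) * x
  = (if bb then x else 1) * ((cos th)%:C + 'i * (sin th)%:C * x).
Proof.
move=> Hx; have tf : (true == false) = false by [].
have ft : (false == true) = false by [].
case: bb; rewrite /Bg ?eqxx ?tf ?ft ?cconj_real ?cconj_mi.
  have -> : x * ((cos th)%:C + 'i * (sin th)%:C * x)
     = (cos th)%:C * x + 'i * (sin th)%:C * (x * x) by ring.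
  rewrite Hx; ring.
ring.
Qed.

Lemma normsqM (r : R) (z : C) : normsq (r%:C * z) = r ^+ 2 * normsq z.
Proof. by case: z => a b; rewrite /normsq /=; ring. Qed.

Section Main.
Variables (q : nat) (gs : seq (gate R q)).
Local Notation m := (size gs).
Definition dg : gate R q := (0, [ffun=> false]).
Definition zg (g : 'I_m) : bits q := (nth dg gs g).2.
Definition thg (g : 'I_m) : R := (nth dg gs g).1.
Definition Ebig : rel 'I_(q + m) := Eg zg.
Definition Bbig (j : 'I_(q + m)) : qubit_basis R :=
  match split j with inl _ => Bx | inr g => Bg (thg g) end.
Definition Amp (v : bits q) : C := \sum_a chi v a * \prod_(g <- gs) phi g a.

Lemma cconj_Bx t b : cconj (Bx t b) = Bx t b.
Proof. by case: t; case: b; apply/eqP; rewrite eq_complex /=; simpc. Qed.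

Lemma Bx_prod (t a : bits q) :
  \prod_(i < q) cconj (Bx (t i) (a i)) = (rho ^+ q)%:C * chi t a.
Proof.
have -> : (rho ^+ q)%:C = \prod_(i < q) (rho%:C : C) by rewrite prodr_const card_ord rmorphXn.
rewrite /chi /Bx -big_split /=.
by apply: eq_bigr => i _; rewrite cconj_Bx /Bx mulrC.
Qed.


Lemma mamp_join (t : bits q) (b : bits m) :
  \sum_(w : bits (q + m)) (\prod_j cconj (Bbig j (join t b j) (w j))) * graph_state R Ebig w
  = (rho ^+ q)%:C * (rho ^+ (q + m))%:C * Amp (bxor t (ub b zg)).
Proof.
rewrite sum_join /Amp mulr_sumr; apply: eq_bigr => a _.
pose sg (c : bool) : C := if c then -1 else 1.
transitivity (\sum_(beta : bits m) ((rho ^+ q)%:C * chi t a) *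
    (\prod_(g < m) cconj (Bg (thg g) (b g) (beta g))) *
    ((rho ^+ (q + m))%:C * \prod_(i < q) \prod_(g < m) sg (zg g i && a i && beta g))).
  apply: eq_bigr => beta _; rewrite graph_stateE edges_join prod_split -Bx_prod.
  congr (_ * _ * _); apply: eq_bigr => i _;
    by rewrite /Bbig ?split_l ?split_r ?join_l ?join_r.
transitivity ((rho ^+ q)%:C * (rho ^+ (q + m))%:C * (chi t a *
   \sum_(beta : bits m) \prod_(g < m) (cconj (Bg (thg g) (b g) (beta g)) *
        \prod_(i < q) sg (zg g i && a i && beta g)))).
  rewrite !mulr_sumr; apply: eq_bigr => beta _.
  rewrite [\prod_(i < q) _]exchange_big /= big_split /=; ring.
rewrite -(bigA_distr_bigA (fun g x => cconj (Bg (thg g) (b g) x) *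
        \prod_(i < q) sg (zg g i && a i && x))) /=.
congr (_ * _).
under eq_bigr => g _ do rewrite big_bool /= addrC.
have Hsg0 : forall g : 'I_m, \prod_(i < q) sg (zg g i && a i && false) = 1.
  by move=> g; apply: big1 => i _; rewrite andbF.
have Hsg1 : forall g : 'I_m, \prod_(i < q) sg (zg g i && a i && true) = chi (zg g) a.
  by move=> g; apply: eq_bigr => i _; rewrite andbT.
under eq_bigr => g _ do rewrite Hsg0 Hsg1 (gate_factor _ _ (chi_sq _ _)).
rewrite big_split /= -chi_ub chi_xor -mulrA; congr (_ * (_ * _)).
by rewrite (big_nth dg) big_mkord.
Qed.

Lemma iqp_amp (x0 y : bits q) :
  apply_circuit gs (@ket R q x0) y = (rho ^+ (2 * q))%:C * Amp (bxor y x0).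
Proof.
rewrite (circ_fourier gs (F := fun a => (rho ^+ (2 * q))%:C * chi x0 a)); last first.
  by move=> w; rewrite ket_fourier.
rewrite /Amp mulr_sumr; apply: eq_bigr => a _; rewrite chi_xor; ring.
Qed.

Definition Abig (i : 'I_q) (j : 'I_(q + m)) : bool :=
  match split j with inl i' => i' == i | inr g => zg g i end.

Lemma lin_post_join (c : bits q) (t : bits q) (b : bits m) :
  lin_post Abig c (join t b) = bxor (bxor c t) (ub b zg).
Proof.
apply/ffunP => i; rewrite /ub !ffunE big_split_ord /= addbA; congr (_ (+) _ (+) _).
  rewrite (bigD1 i) //= /Abig split_l eqxx join_l big1 ?addbF // => k /negbTE.
  by rewrite split_l => ->.
by apply: eq_bigr => g _; rewrite /Abig split_r join_r andbC.
Qed.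

Lemma bxor_cancel (u v : bits q) : bxor (bxor u v) v = u.
Proof. by apply/ffunP => i; rewrite !ffunE -addbA addbb addbF. Qed.

Lemma mprob_join (x0 t : bits q) (b : bits m) :
  mbqc_prob Ebig Bbig (join t b) =
  rho ^+ (2 * m) * normsq (apply_circuit gs (@ket R q x0) (lin_post Abig x0 (join t b))).
Proof.
rewrite /mbqc_prob mamp_join iqp_amp lin_post_join.
have -> : bxor (bxor (bxor x0 t) (ub b zg)) x0 = bxor t (ub b zg).
  by apply/ffunP => i; rewrite !ffunE; case: (x0 i); case: (t i); case: (\big[addb/false]_(g < m) (b g && zg g i)).
have -> : (rho ^+ q)%:C * (rho ^+ (q + m))%:C = (rho ^+ m)%:C * (rho ^+ (2 * q))%:C :> C.
  by rewrite -!rmorphM /= -!exprD; congr (_ ^+ _)%:C; rewrite mul2n -addnn; lia.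
by rewrite -mulrA !normsqM exprM mulnC exprM.
Qed.

Lemma out_prob (x0 y : bits q) :
  mbqc_out_prob Ebig Bbig Abig x0 y = normsq (apply_circuit gs (@ket R q x0) y).
Proof.
rewrite /mbqc_out_prob big_mkcond sum_join /=.
under eq_bigr => t _ do under eq_bigr => b _ do rewrite (mprob_join x0) lin_post_join.
rewrite exchange_big /=.
have cond : forall t u, (bxor (bxor x0 t) u == y) = (t == bxor (bxor x0 y) u).
  move=> t u; apply/eqP/eqP => [<-|->]; apply/ffunP => i; rewrite !ffunE;
    by case: (x0 i); case: (t i); case: (u i); case: (y i).
under eq_bigr => b _ do under eq_bigr => t _ do rewrite cond.
under eq_bigr => b _ do rewrite -big_mkcond big_pred1_eq.
have back : forall u, bxor (bxor x0 (bxor (bxor x0 y) u)) u = y.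
  by move=> u; apply/ffunP => i; rewrite !ffunE; case: (x0 i); case: (u i); case: (y i).
under eq_bigr => b _ do rewrite back.
rewrite sumr_const card_ffun card_bool card_ord -mulr_natl mulrA.
rewrite natrX exprM -exprMn [2 * _]mulrC rho2 expr1n mul1r.
by []. Qed.
End Main.
End S.

Local Close Scope complex_scope.

Theorem lemma3 (R : realType) (qf : nat -> nat)
    (gs : forall n : nat, seq (gate R (qf n))) :
  (forall n : nat, (n <= qf n)%N) ->
  poly_bounded qf ->
  poly_bounded (fun n => size (gs n)) ->
  (forall (n : nat) (g : gate R (qf n)), g \in gs n -> gate_ok g) ->
  exists Nf : nat -> nat,
    poly_bounded Nf /\
    forall n : nat,
      exists (E : rel 'I_(Nf n)) (B : 'I_(Nf n) -> qubit_basis R),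
        (forall j : 'I_(Nf n), qubit_onb (B j)) /\
        forall x : bits n,
          exists (A : 'I_(qf n) -> 'I_(Nf n) -> bool) (c : bits (qf n)),
            forall y : bits (qf n),
              mbqc_out_prob E B A c y = iqp_prob (gs n) x y.
Proof.
move=> _ [C1 [k1 H1]] [C2 [k2 H2]] _.
exists (fun n => (qf n + size (gs n))%N); split.
  exists (C1 + C2)%N, (k1 + k2)%N => n; rewrite mulnDl.
  have e1 : (n.+1 ^ k1 <= n.+1 ^ (k1 + k2))%N by rewrite leq_pexp2l // leq_addr.
  have e2 : (n.+1 ^ k2 <= n.+1 ^ (k1 + k2))%N by rewrite leq_pexp2l // leq_addl.
  apply: leq_add.
    by apply: (leq_trans (H1 n)); rewrite leq_mul2l e1 orbT.
  by apply: (leq_trans (H2 n)); rewrite leq_mul2l e2 orbT.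
move=> n; exists (@Ebig _ _ (gs n)), (@Bbig _ _ (gs n)); split.
  move=> j; rewrite /Bbig; case: (split j) => g; [exact: Bx_onb | exact: Bg_onb].
move=> x; exists (@Abig _ _ (gs n)), (@iqp_input n (qf n) x) => y.
by rewrite out_prob.
Qed.
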